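(* Let $G=(V,E)$ be a chordal graph on a non-empty finite vertex set $V$, and let $\{A_v\}_{v\in V}$ be events in a probability space. Then for every integer $r\ge 1$, \[ \sum_{I\in\mathscr{C}(G)} (-1)^{|I|-1}\,\Pr\Big(\bigcap_{i\in I} A_i\Big) \;\ge\; \sum_{\substack{I\in\mathscr{C}(G)\\ |I|\le 2r}} (-1)^{|I|-1}\,\Pr\Big(\bigcap_{i\in I} A_i\Big). \]
   Context: A graph is chordal if it contains no cycle of length four or more as an induced subgraph. $\mathscr{C}(G)$ denotes the clique complex of $G$: the set of all non-empty subsets $I\subseteq V$ whose elements are pairwise adjacent in $G$. *)

(* Defs.v *)
From HB Require Import structures.
From mathcomp Require Import all_boot.
From Stdlib Require Import Reals.

Record probability_space := ProbSpace {
  ps_carrier :> Type;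
  ps_meas : (ps_carrier -> Prop) -> Prop;
  ps_P : (ps_carrier -> Prop) -> R;
  ps_meas_full : ps_meas (fun _ => True);
  ps_meas_compl : forall A, ps_meas A -> ps_meas (fun w => ~ A w);
  ps_meas_cunion : forall F : nat -> ps_carrier -> Prop,
      (forall n, ps_meas (F n)) -> ps_meas (fun w => exists n, F n w);
  ps_P_nonneg : forall A, ps_meas A -> (0 <= ps_P A)%R;
  ps_P_full : ps_P (fun _ => True) = 1%R;
  ps_P_sigma : forall F : nat -> ps_carrier -> Prop,
      (forall n, ps_meas (F n)) ->
      (forall m n, m <> n -> forall w, F m w -> F n w -> False) ->
      infinite_sum (fun n => ps_P (F n)) (ps_P (fun w => exists n, F n w))
}.

Set Implicit Arguments.
Unset Strict Implicit.
Unset Printing Implicit Defensive.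

(* A simple graph on a finite type V is a symmetric irreflexive relation e. *)

Definition induced_cycle (V : eqType) (e : rel V) (x0 : V) (s : seq V) : Prop :=
  forall i j, (i < size s)%N -> (j < size s)%N ->
    (e (nth x0 s i) (nth x0 s j) <->
     (j == i.+1 %% size s) || (i == j.+1 %% size s)).

Definition chordal (V : eqType) (e : rel V) : Prop :=
  forall (x0 : V) (s : seq V), uniq s -> (4 <= size s)%N -> ~ induced_cycle e x0 s.

Definition in_clique_complex (V : finType) (e : rel V) (I : {set V}) : bool :=
  (I != set0) && [forall x in I, forall y in I, (x != y) ==> e x y].

Definition bigcap_events (V : finType) (Om : probability_space)
  (A : V -> Om -> Prop) (I : {set V}) : Om -> Prop :=
  fun w => forall i, i \in I -> A i w.

Definition clique_term (V : finType) (Om : probability_space)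
  (A : V -> Om -> Prop) (I : {set V}) : R :=
  ((-1) ^ (subn #|I| 1) * ps_P Om (bigcap_events A I))%R.

(* Main.v *)
Require Import Defs.
From HB Require Import structures.
From mathcomp Require Import all_boot.
From Stdlib Require Import Reals.
From Stdlib Require Import Lra Classical Lia FunctionalExtensionality PropExtensionality ClassicalEpsilon.
Import ssrnat.
Set Implicit Arguments. Unset Strict Implicit. Unset Printing Implicit Defensive.
Ltac natlia := repeat match goal with
 | H : is_true (leq _ _) |- _ => have := elimT leP H; clear H; rewrite -?subn1 -?plusE -?minusE -?multE; intro
 end; try apply/leP; rewrite -?subn1 -?plusE -?minusE -?multE; lia.

Section Paths.
Variable V : finType.
Implicit Types (R : rel V) (x : V) (p : seq V).

Lemma last_take x p i : i <= size p -> last x (take i p) = nth x (x::p) i.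
Proof.
elim: p x i => [|a p IH] x [|i] //= Hi.
by rewrite IH // (set_nth_default x).
Qed.

Lemma shortcut_edge R x p i j : path R x p -> i <= j -> j < size p ->
  R (nth x (x::p) i) (nth x p j) ->
  [/\ path R x (take i p ++ drop j p), last x (take i p ++ drop j p) = last x p
    & size (take i p ++ drop j p) = i + (size p - j)].
Proof.
move=> Hp Hij Hj HR.
have Hi : i <= size p by apply: leq_trans Hij (ltnW Hj).
have Hp' := Hp; rewrite -(cat_take_drop j.+1 p) cat_path in Hp'.
case/andP: Hp' => _ Hd.
rewrite last_take // in Hd.
have Hp'' := Hp; rewrite -(cat_take_drop i p) cat_path in Hp''.
case/andP: Hp'' => Hp1 _.
rewrite (drop_nth x Hj) cat_path last_take // /= HR /= Hd Hp1.
rewrite last_cat last_take //= size_cat size_takel //= size_drop.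
split => //.
by rewrite -[in RHS](cat_take_drop j.+1 p) last_cat last_take.
by rewrite subnSK.
Qed.

Lemma shortcut_eq R x p i j : path R x p -> i < j -> j <= size p ->
  nth x (x::p) i = nth x (x::p) j ->
  [/\ path R x (take i p ++ drop j p), last x (take i p ++ drop j p) = last x p
    & size (take i p ++ drop j p) = i + (size p - j)].
Proof.
move=> Hp Hij Hj Heq.
have Hi : i <= size p by apply: leq_trans (ltnW Hij) Hj.
have Hp' := Hp; rewrite -(cat_take_drop j p) cat_path in Hp'.
case/andP: Hp' => _ Hd.
have Hp'' := Hp; rewrite -(cat_take_drop i p) cat_path in Hp''.
case/andP: Hp'' => Hp1 _.
rewrite cat_path Hp1 last_take // Heq -last_take // Hd last_cat last_take // Heq -last_take //.
rewrite -last_cat cat_take_drop size_cat size_takel // size_drop.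
by [].
Qed.

Lemma shortest R x y : connect R x y -> exists p, [/\ path R x p, last x p = y,
  uniq (x::p) & forall i j, i < j -> j < size p -> ~~ R (nth x (x::p) i) (nth x p j)].
Proof.
case/connectP => p0 Hp0 Hl0.
suff : forall n p, size p <= n -> path R x p -> last x p = y -> exists p, [/\ path R x p, last x p = y,
  uniq (x::p) & forall i j, i < j -> j < size p -> ~~ R (nth x (x::p) i) (nth x p j)].
  by move/(_ (size p0) p0 (leqnn _) Hp0 (esym Hl0)).
elim=> [|n IH] p Hs Hp Hl.
  move: Hs; rewrite leqn0 => /nilP Ep; subst p; exists [::]; split => // i j _; by [].
case: (boolP (uniq (x::p))) => Hu; last first.
  case/(uniqPn x): Hu => i [j [Hij Hj Heq]].
  have Hj2 : j <= size p by rewrite -ltnS.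
  have [Hp' Hl' Hs'] := @shortcut_eq R x p i j Hp Hij Hj2 Heq.
  apply: (IH _ _ Hp' (etrans Hl' Hl)); rewrite Hs'.
  natlia.
case: (classic (exists i j, [/\ i < j, j < size p & R (nth x (x::p) i) (nth x p j)])).
  case=> i [j [Hij Hj HR]].
  have [Hp' Hl' Hs'] := @shortcut_edge R x p i j Hp (ltnW Hij) Hj HR.
  apply: (IH _ _ Hp' (etrans Hl' Hl)); rewrite Hs'.
  natlia.
move=> Hn; exists p; split => // i j Hij Hj; apply/negP => HR; apply: Hn; exists i, j; by split.
Qed.
End Paths.


Section Graph.
Variable V : eqType.
Variable e : rel V.
Hypothesis e_sym : symmetric e.
Hypothesis e_irr : irreflexive e.
Hypothesis e_ch : chordal e.

Lemma modS_eq n a b : 1 < n -> a < n -> (b == a.+1 %% n) = if a.+1 == n then b == 0 else b == a.+1.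
Proof.
move=> Hn Ha; case: (boolP (a.+1 == n)) => [/eqP He|Hne]; first by rewrite He modnn.
by rewrite modn_small // ltn_neqAle Ha Hne.
Qed.

Lemma ifS_eq a b n : a < n -> b < n -> (if a.+2 == n.+1 then b.+1 == 0 else b.+1 == a.+2) = (b == a.+1).
Proof. move=> Ha Hb; rewrite !eqSS; case: eqP => [E|_] //; subst n; by rewrite (ltn_eqF Hb). Qed.

Lemma iffE (a b : bool) : a = b -> (a <-> b).
Proof. by move->. Qed.

Lemma no_hole x q : uniq (x::q) -> 3 <= size q -> e x (head x q) -> e x (last x q) ->
  (forall k, 0 < k -> k < (size q).-1 -> ~~ e x (nth x q k)) ->
  (forall i j, i < size q -> j < size q -> e (nth x q i) (nth x q j) = (j == i.+1) || (i == j.+1)) ->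
  False.
Proof.
move=> Hu Hs Hh Hl Hint Hq.
apply: (@e_ch x (x::q)) => //.
rewrite /induced_cycle => i j; rewrite /= !ltnS => Hi Hj.
have H1 : 1 < (size q).+1 by rewrite ltnS; apply: leq_trans Hs.
rewrite !modS_eq //; apply: iffE.
have E1 : (1 == (size q).+1) = false by case: (size q) Hs.
case: i Hi => [|i] Hi; case: j Hj => [|j] Hj /=; rewrite ?E1.
- by rewrite e_irr.
- rewrite eqSS.
  case: (ltnP 0 j) => Hj0; last first.
    move: Hj0; rewrite leqn0 => /eqP ->; rewrite -nth0 in Hh; rewrite Hh /=; by [].
  case: (ltnP j (size q).-1) => Hj1.
    rewrite (negbTE (Hint j Hj0 Hj1)); symmetry; apply/negbTE.
    rewrite negb_or -lt0n Hj0 /=;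
    have -> : (j.+2 == (size q).+1) = false by apply/negbTE; rewrite eqSS neq_ltn (_ : j.+1 < size q) //; natlia.
    by [].
  have Ej : j = (size q).-1 by natlia.
  rewrite Ej nth_last Hl; case: (size q) Hs => [|s] // _ /=; rewrite eqxx orbT; by [].
- rewrite eqSS e_sym.
  case: (ltnP 0 i) => Hi0; last first.
    move: Hi0; rewrite leqn0 => /eqP ->; rewrite -nth0 in Hh; by rewrite Hh eqxx orbT.
  case: (ltnP i (size q).-1) => Hi1.
    rewrite (negbTE (Hint i Hi0 Hi1)); symmetry; apply/negbTE.
    rewrite negb_or -lt0n Hi0 /= andbT; have -> : (i.+1 == size q) = false by apply/negbTE; rewrite neq_ltn (_ : i.+1 < size q) //; natlia.
    by [].
  have Ei : i = (size q).-1 by natlia.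
  rewrite Ei nth_last Hl; case: (size q) Hs => [|s] // _ /=; rewrite eqxx; by [].
- by rewrite (Hq i j Hi Hj) !ifS_eq.
Qed.
End Graph.


Section Graph2.
Variable V : finType.
Variable e : rel V.
Hypothesis e_sym : symmetric e.
Hypothesis e_irr : irreflexive e.
Hypothesis e_ch : chordal e.

Definition clq (T : {set V}) := [forall x in T, forall y in T, (x != y) ==> e x y].
Definition simp (T : {set V}) z := clq (T :&: [set y | e z y]).

Lemma clqP (T : {set V}) : reflect (forall x y, x \in T -> y \in T -> x != y -> e x y) (clq T).
Proof.
apply: (iffP forall_inP) => [H x y Hx Hy Hxy | H x Hx].
  by move/forall_inP: (H x Hx) => /(_ y Hy) /implyP; apply.
by apply/forall_inP => y Hy; apply/implyP; apply: H.
Qed.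

Lemma clq_sub (A B : {set V}) : A \subset B -> clq B -> clq A.
Proof.
move=> /subsetP HAB /clqP HB; apply/clqP => x y Hx Hy; apply: HB; exact: HAB.
Qed.

Lemma path_in (R : rel V) (W : pred V) a p : (forall u v, R u v -> v \in W) -> a \in W ->
  path R a p -> forall z, z \in a :: p -> z \in W.
Proof.
move=> HR; elim: p a => [|b p IH] a Ha /=.
  by move=> _ z; rewrite inE => /eqP ->.
case/andP => Hab Hp z; rewrite inE => /orP [/eqP -> //|].
apply: IH => //; exact: HR Hab.
Qed.

Lemma L n : forall T : {set V}, #|T| <= n -> forall x y, x \in T -> y \in T -> y != x -> ~~ e x y ->
  exists z, [/\ z \in T, z != x, ~~ e x z & simp T z].
Proof.
elim: n => [|n IH] T HT x y Hx Hy Hyx Hxy.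
  by move: HT; rewrite leqn0 => /eqP/cards0_eq HT; rewrite HT inE in Hx.
pose W := [set z in T | (z != x) && ~~ e x z].
pose r := [rel a b | [&& e a b, a \in W & b \in W]].
pose C := [set c | connect r y c].
pose S := [set s in T | e x s && [exists c in C, e s c]].
pose T' := C :|: S.
have HyW : y \in W by rewrite inE Hy Hyx Hxy.
have HCW : forall c, c \in C -> c \in W.
  move=> c; rewrite inE => /connectP [p Hp ->].
  apply: (@path_in r (mem W) y p _ HyW Hp); first by move=> u v /and3P [].
  exact: mem_last.
have HC2 : forall c z, c \in C -> z \in W -> e c z -> z \in C.
  move=> c z Hc Hz Hcz; rewrite inE; apply: (@connect_trans _ r c).
    by move: Hc; rewrite inE.
  by apply: connect1; rewrite /= Hcz HCW.
have HC3 : forall c z, c \in C -> z \in T -> e c z -> z \in T'.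
  move=> c z Hc Hz Hcz.
  have HcW := HCW c Hc; move: (HcW); rewrite inE => /and3P [_ Hcx Hxc].
  case: (eqVneq z x) => [Ezx|Hzx].
    by subst z; rewrite e_sym Hcz in Hxc.
  case: (boolP (e x z)) => Hxz.
    rewrite inE; apply/orP; right; rewrite inE Hz Hxz /=; apply/existsP; exists c.
    by rewrite Hc e_sym Hcz.
  rewrite inE; apply/orP; left; apply: (HC2 c) => //; by rewrite inE Hz Hzx Hxz.
have HT'T : T' \subset T.
  apply/subsetP => z; rewrite inE => /orP [/HCW|]; rewrite inE; [by case/andP | by case/andP].
have HxT' : x \notin T'.
  rewrite inE negb_or; apply/andP; split.
    by apply/negP => /HCW; rewrite inE eqxx andbF.
  by rewrite inE e_irr andbF.
have HT'n : #|T'| <= n.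
  rewrite -ltnS; apply: leq_trans HT; apply: proper_card; apply/properP; split => //.
  by exists x.
have HyC : y \in C by rewrite inE connect0.
have HsimpC : forall c, c \in C -> simp T' c -> simp T c.
  move=> c Hc; apply: clq_sub; apply/subsetP => z; rewrite !in_setI => /andP [Hz Hcz].
  rewrite Hcz andbT; apply: (HC3 c) => //; by rewrite inE in Hcz.
have HS : forall s t, s \in S -> t \in S -> s != t -> e s t.
  move=> s t Hs Ht Hst; apply/negPn/negP => Hnst.
  move: Hs Ht; rewrite !inE => /and3P [HsT Hxs /exists_inP [c1 Hc1 Hsc1]] /and3P [HtT Hxt /exists_inP [c2 Hc2 Htc2]].
  pose W2 := C :|: [set s; t].
  pose r2 := [rel a b | [&& e a b, a \in W2 & b \in W2]].
  have HCW2 : forall c, c \in C -> c \in W2 by move=> c Hc; rewrite inE Hc.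
  have HsW2 : s \in W2 by rewrite !inE eqxx orbT.
  have HtW2 : t \in W2 by rewrite !inE eqxx !orbT.
  have Hlift : forall p a, a \in C -> path r a p -> path r2 a p.
    elim=> [|b p IHp] a Ha //=; case/andP => /and3P [Hab HaW HbW] Hp.
    have HbC : b \in C := HC2 a b Ha HbW Hab.
    by rewrite Hab (HCW2 a Ha) (HCW2 b HbC) /= (IHp b).
  have Hc12 : connect r c1 c2.
    have Hrs : symmetric r by move=> a b; rewrite /r /= e_sym; case: (a \in W); case: (b \in W); rewrite ?andbT ?andbF.
    have Hsym := sym_connect_sym Hrs.
    have Hc1' : connect r y c1 by move: Hc1; rewrite inE.
    have Hc2' : connect r y c2 by move: Hc2; rewrite inE.
    apply: (@connect_trans _ r y) => //; by move: (Hsym c1 y) => ->.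
  have Hst2 : connect r2 s t.
    apply: (@connect_trans _ r2 c1); first by apply: connect1; rewrite /= Hsc1 HsW2 HCW2.
    apply: (@connect_trans _ r2 c2).
      by case/connectP: Hc12 => p Hp ->; apply/connectP; exists p => //; exact: Hlift.
    by apply: connect1; rewrite /= e_sym Htc2 HtW2 HCW2.
  have [p [Hp Hl Hu Hch]] := @shortest V r2 s t Hst2.
  have HpW2 : forall z, z \in s :: p -> z \in W2.
    apply: (@path_in r2 (mem W2) s p) => //; by move=> u v /and3P [].
  have HxW2 : x \notin W2.
    rewrite in_setU negb_or; apply/andP; split.
      by apply/negP => /HCW; rewrite inE eqxx andbF.
    rewrite !inE negb_or; apply/andP; split; apply/eqP => Ex.
      by rewrite Ex e_irr in Hxs.
    by rewrite Ex e_irr in Hxt.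
  pose q := s :: p.
  have Hnth : forall k, k < size q -> nth x q k \in W2.
    by move=> k Hk; apply: HpW2; apply: mem_nth.
  have Hlt : forall i j, i < j -> j < size q -> e (nth x q i) (nth x q j) = (j == i.+1).
    move=> i j Hij Hj.
    have -> : e (nth x q i) (nth x q j) = r2 (nth x q i) (nth x q j).
      by rewrite /= Hnth ?(ltn_trans Hij) // Hnth // !andbT.
    case: j Hij Hj => [|j] // Hij Hj; rewrite eqSS.
    have -> : nth x q j.+1 = nth x p j by [].
    case: (ltngtP i j) => Hij'.
    - have Hiq : i < size q by apply: ltn_trans Hij' (ltn_trans (ltnSn j) Hj).
      rewrite (set_nth_default s x Hiq).
      have Hj' : j < size p := Hj.
      rewrite (set_nth_default s x Hj').
      by apply/negbTE; apply: Hch.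
    - by rewrite ltnS in Hij; move: (leq_trans Hij' Hij); rewrite ltnn.
    - subst j; rewrite ?eqxx; by move/(pathP x): Hp => /(_ i Hj).
  apply: (@no_hole V e e_sym e_irr e_ch x q).
  - rewrite /= -/q; apply/andP; split => //.
    by apply/negP => /HpW2 HxW; rewrite HxW in HxW2.
  - rewrite /q; case: p Hp Hl {Hu Hch HpW2 Hnth Hlt q} => [|b [|b' p]] //=.
      by move=> _ Est; rewrite Est eqxx in Hst.
    by move=> /andP [/and3P [Hsb _ _] _] Eb; rewrite -Eb Hsb in Hnst.
  - by [].
  - by rewrite /= Hl.
  - move=> k Hk0 Hk.
    have Hk' : k < size q by rewrite /q /= ltnS ltnW.
    have := Hnth k Hk'; rewrite in_setU in_set2 => /orP [Hc | /orP [/eqP Es | /eqP Et]].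
    + by have := HCW _ Hc; rewrite inE => /and3P [].
    + have : nth x q k == nth x q 0 by rewrite Es.
      by rewrite nth_uniq // => /eqP Ek; rewrite Ek in Hk0.
    + have Ht' : t = nth x q (size p).
        rewrite -Hl /q -nth_last (set_nth_default s x) //; by case: (p).
      have : nth x q k == nth x q (size p) by rewrite Et -Ht'.
      rewrite nth_uniq //; first by move/eqP => Ek; move: Hk; rewrite Ek /= ltnn.
  - move=> i j Hi Hj.
    case: (ltngtP i j) => Hij.
    + by rewrite Hlt // (ltn_eqF (ltn_trans Hij (ltnSn j))) orbF.
    + by rewrite e_sym Hlt // (ltn_eqF (ltn_trans Hij (ltnSn i))).
    + by subst j; rewrite e_irr (ltn_eqF (ltnSn i)).
case: (boolP (clq T')) => Hcl.
  exists y; split => //.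
  apply: HsimpC => //; apply: clq_sub Hcl; exact: subsetIl.
have [u [w [Hu Hw Huw Heuw]]] : exists u w, [/\ u \in T', w \in T', u != w & ~~ e u w].
  case: (classic (exists u w, [/\ u \in T', w \in T', u != w & ~~ e u w])) => // Hn.
  exfalso; move/negP: Hcl; apply; apply/clqP => a b Ha Hb Hab.
  apply/negPn/negP => Hn'; apply: Hn; exists a, b; by split.
have Hwu : w != u by rewrite eq_sym.
have HCor : forall z, z \in T' -> z \notin C -> z \in S.
  by move=> z; rewrite inE => /orP [-> //|].
have HCgood : forall z, z \in C -> simp T' z -> exists z, [/\ z \in T, z != x, ~~ e x z & simp T z].
  move=> z Hz Hs; exists z; have := HCW z Hz; rewrite inE => /and3P [HzT Hzx Hxz].
  by split => //; apply: HsimpC.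
have [z1 [Hz1 Hz1u Huz1 Hs1]] := IH T' HT'n u w Hu Hw Hwu Heuw.
case: (boolP (z1 \in C)) => Hz1C; first exact: HCgood Hs1.
have Hz1S := HCor z1 Hz1 Hz1C.
have Heu : ~~ e z1 u by rewrite e_sym.
have Huz1' : u != z1 by rewrite eq_sym.
have [z2 [Hz2 Hz2z1 Hz1z2 Hs2]] := IH T' HT'n z1 u Hz1 Hu Huz1' Heu.
case: (boolP (z2 \in C)) => Hz2C; first exact: HCgood Hs2.
have Hz2S := HCor z2 Hz2 Hz2C.
by rewrite e_sym (HS z2 z1) in Hz1z2.
Qed.

Lemma simp_exists (T : {set V}) : T != set0 -> exists2 z, z \in T & simp T z.
Proof.
move=> /set0Pn [z0 Hz0].
case: (boolP (clq T)) => Hcl.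
  by exists z0 => //; apply: clq_sub Hcl; exact: subsetIl.
have [u [w [Hu Hw Huw Heuw]]] : exists u w, [/\ u \in T, w \in T, u != w & ~~ e u w].
  case: (classic (exists u w, [/\ u \in T, w \in T, u != w & ~~ e u w])) => // Hn.
  exfalso; move/negP: Hcl; apply; apply/clqP => a b Ha Hb Hab.
  apply/negPn/negP => Hn'; apply: Hn; exists a, b; by split.
have Hwu : w != u by rewrite eq_sym.
have [z [Hz _ _ Hs]] := @L #|T| T (leqnn _) u w Hu Hw Hwu Heuw.
by exists z.
Qed.
End Graph2.

HB.instance Definition _ := Monoid.isComLaw.Build R 0%R Rplus (fun a b c => esym (Rplus_assoc a b c)) Rplus_comm Rplus_0_l.
HB.instance Definition _ := Monoid.isMulLaw.Build R 0%R Rmult Rmult_0_l Rmult_0_r.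
HB.instance Definition _ := Monoid.isAddLaw.Build R Rmult Rplus Rmult_plus_distr_r Rmult_plus_distr_l.

Section Comb.
Variable V : finType.
Variable e : rel V.
Hypothesis e_sym : symmetric e.
Hypothesis e_irr : irreflexive e.
Hypothesis e_ch : chordal e.

Definition nb (v : V) := [set y | e v y].

Definition gk (k : nat) (T : {set V}) : R :=
  \big[Rplus/0%R]_(I : {set V} | [&& I \subset T, clq e I & k <= #|I|]) ((-1) ^ #|I|)%R.

Lemma clq_U1 v (J : {set V}) : v \notin J -> clq e (v |: J) = clq e J && (J \subset nb v).
Proof.
move=> HvJ; apply/clqP/andP => [H|[/clqP HJ /subsetP HN] x y].
  split; first by apply/clqP => x y Hx Hy; apply: H; rewrite inE ?Hx ?Hy orbT.
  apply/subsetP => y Hy; rewrite inE; apply: H; rewrite ?inE ?eqxx ?Hy ?orbT //.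
  by apply/eqP => Evy; rewrite Evy Hy in HvJ.
rewrite !inE => /orP [/eqP ->|Hx] /orP [/eqP ->|Hy] Hxy.
- by rewrite eqxx in Hxy.
- by have := HN y Hy; rewrite inE.
- by have := HN x Hx; rewrite inE e_sym.
- exact: HJ.
Qed.

Lemma opp_m1 (x : R) : (- x = -1 * x)%R.
Proof. ring. Qed.

Lemma gk_rec k (T : {set V}) v : v \in T ->
  gk k T = (gk k (T :\ v) - gk k.-1 (T :&: nb v))%R.
Proof.
move=> HvT; rewrite /gk (bigID (fun I : {set V} => v \in I)) /= Rplus_comm.
congr (_ + _)%R.
  apply: eq_bigl => I; rewrite subsetD1; case: (I \subset T) => //=.
  by case: (clq e I); case: (k <= #|I|); case: (v \in I).
rewrite (reindex_onto (fun J => v |: J) (fun I => I :\ v)); last first.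
  by move=> I /andP [_ HvI]; rewrite setD1K.
rewrite [RHS]opp_m1 big_distrr /=.
apply: eq_big => J.
  case: (boolP (v \in J)) => HvJ.
    rewrite setU11 /= andbT.
    have -> : ((v |: J) :\ v == J) = false.
      by apply/negbTE; apply/eqP => E; move: HvJ; rewrite -E !inE eqxx.
    rewrite andbF; symmetry; apply/negbTE; apply/negP => /andP [/subsetP HJ _].
    by have := HJ v HvJ; rewrite !inE e_irr andbF.
  rewrite setU11 setU1K // eqxx andbT andbT subUset sub1set HvT /= clq_U1 // cardsU1 HvJ.
  rewrite subsetI add1n; case: (J \subset T) => //=; case: (clq e J); case: (J \subset nb v) => //=.
  by case: k.
move=> /andP [_ HJ]; rewrite cardsU1.
have HvJ : v \notin J.
  apply/negP => HvJ; move/eqP: HJ => E.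
  have : v \notin (v |: J) :\ v by rewrite !inE eqxx.
  by rewrite E HvJ.
by rewrite HvJ.
Qed.
Lemma gk_set0 k : 0 < k -> gk k set0 = 0%R.
Proof.
move=> Hk; rewrite /gk big_pred0 // => I; rewrite subset0.
case: eqP => //= ->; rewrite cards0; case: k Hk => // k _; by rewrite andbF.
Qed.

Lemma nb_clq (S : {set V}) v : clq e S -> v \in S -> S :&: nb v = S :\ v.
Proof.
move=> /clqP HS Hv; apply/setP => y; rewrite !inE.
case: (boolP (y \in S)) => Hy; rewrite ?andbF ?andbT //.
case: (eqVneq y v) => [->|Hyv]; first by rewrite e_irr.
by rewrite HS // eq_sym.
Qed.

Lemma gk0_clq (S : {set V}) : clq e S -> (0 <= gk 0 S)%R.
Proof.
move=> HS; case: (eqVneq S set0) => [->|/set0Pn [v Hv]].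
  rewrite /gk (big_pred1 set0); first by rewrite cards0 /=; lra.
  move=> I /=; rewrite subset0 andbT; case: eqP => //= ->.
  by apply/clqP => x y; rewrite inE.
rewrite (gk_rec 0 Hv) /= nb_clq //; lra.
Qed.

Lemma gk_sign n : forall k (T : {set V}), #|T| <= n -> 0 < k -> (0 <= (-1) ^ k * gk k T)%R.
Proof.
elim: n => [|n IH] k T HT Hk.
  move: HT; rewrite leqn0 => /eqP/cards0_eq ->; rewrite gk_set0 //; lra.
case: (eqVneq T set0) => [->|HT0]; first by rewrite gk_set0 //; lra.
have [v Hv Hs] := simp_exists e_sym e_irr e_ch HT0.
have Hs' : clq e (T :&: nb v) by [].
rewrite (gk_rec k Hv).
have HTv : #|T :\ v| <= n.
  by move: HT; rewrite (cardsD1 v T) Hv add1n ltnS.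
have HN : #|T :&: nb v| <= n.
  apply: leq_trans HTv; apply: subset_leq_card; apply/subsetP => y; rewrite !inE.
  case/andP => Hy Hvy; rewrite Hy andbT; apply/eqP => Eyv; by rewrite Eyv e_irr in Hvy.
case: k Hk => [|k] // _.
have E : forall A B : R, ((-1) ^ k.+1 * (A - B) = (-1) ^ k.+1 * A + (-1) ^ k * B)%R.
  by move=> A B /=; ring.
rewrite E; apply: Rplus_le_le_0_compat; first exact: IH.
case: k {E} => [|k].
  by rewrite /=; have := gk0_clq Hs'; lra.
exact: IH.
Qed.
End Comb.


Section Prob.
Variable Om : probability_space.
Local Notation P := (ps_P Om).
Local Notation M := (ps_meas Om).

Lemma pext (X Y : Om -> Prop) : (forall w, X w <-> Y w) -> X = Y.
Proof. move=> H; apply: functional_extensionality => w; exact: propositional_extensionality. Qed.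

Lemma meas_empty : M (fun _ => False).
Proof.
have -> : (fun _ : Om => False) = (fun w => ~ (fun _ => True) w) by apply: pext => w; tauto.
apply: ps_meas_compl; exact: ps_meas_full.
Qed.

Lemma meas_or X Y : M X -> M Y -> M (fun w => X w \/ Y w).
Proof.
move=> HX HY.
pose F (n : nat) := if n is 0 then X else Y.
have -> : (fun w => X w \/ Y w) = (fun w => exists n, F n w).
  apply: pext => w; split => [[H|H]|[[|n] H]]; [by exists 0 | by exists 1 | by left | by right].
by apply: ps_meas_cunion => [[|n]].
Qed.

Lemma meas_and X Y : M X -> M Y -> M (fun w => X w /\ Y w).
Proof.
move=> HX HY.
have -> : (fun w => X w /\ Y w) = (fun w => ~ ((fun w => ~ X w) w \/ (fun w => ~ Y w) w)).
  apply: pext => w /=; split; [tauto|]; move=> H; split; apply: NNPP => H'; apply: H; tauto.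
by apply: ps_meas_compl; apply: meas_or; apply: ps_meas_compl.
Qed.

Lemma meas_not X : M X -> M (fun w => ~ X w).
Proof. exact: ps_meas_compl. Qed.

Lemma sum_const c n : sum_f_R0 (fun _ => c) n = (INR (S n) * c)%R.
Proof.
elim: n => [|n IH]; first by rewrite /=; ring.
change (sum_f_R0 (fun _ => c) (S n)) with (sum_f_R0 (fun _ => c) n + c)%R.
rewrite IH [INR (S (S n))]S_INR; ring.
Qed.

Lemma P_empty : P (fun _ => False) = 0%R.
Proof.
have H := @ps_P_sigma Om (fun _ _ => False) (fun _ => meas_empty) (fun m n _ w H _ => H).
have E : (fun w : Om => exists _ : nat, False) = (fun _ => False) by apply: pext => w; split => [[]|].
rewrite E in H.
have Hc := @ps_P_nonneg Om _ (meas_empty).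
set c := P (fun _ => False) in H Hc *.
case: (Req_dec c 0) => // Hc0.
have Hcp : (c > 0)%R by lra.
case: (H c Hcp) => N HN.
have := HN (S N) (le_S _ _ (le_n _)).
rewrite sum_const /Rdist.
have -> : (INR (S (S N)) * c - c = INR (S N) * c)%R by rewrite [INR (S (S N))]S_INR; ring.
rewrite Rabs_right; last by apply: Rle_ge; apply: Rmult_le_pos => //; exact: pos_INR.
have : (1 <= INR (S N))%R by rewrite S_INR; have := pos_INR N; lra.
nra.
Qed.

Lemma P_add X Y : M X -> M Y -> (forall w, X w -> Y w -> False) ->
  P (fun w => X w \/ Y w) = (P X + P Y)%R.
Proof.
move=> HX HY Hd.
pose F (n : nat) := match n with 0 => X | 1 => Y | _ => (fun _ => False) end.
have HF : forall n, M (F n) by case=> [|[|n]] //=; exact: (meas_empty).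
have HFd : forall m n, m <> n -> forall w, F m w -> F n w -> False.
  case=> [|[|m]] [|[|n]] //= Hmn w; try tauto; by move/(_ w) in Hd; tauto.
have H := @ps_P_sigma Om F HF HFd.
have -> : (fun w => X w \/ Y w) = (fun w => exists n, F n w).
  apply: pext => w; split => [[H1|H1]|[[|[|n]] H1]]; [by exists 0 | by exists 1 | by left | by right | by []].
eapply uniqueness_sum; first exact: H.
move=> eps Heps; exists 1%nat => n Hn.
have -> : sum_f_R0 (fun n => P (F n)) n = (P X + P Y)%R.
  elim: n Hn => [|n IH] Hn; first by inversion Hn.
  case: n IH Hn => [|n] IH Hn; first by rewrite /=.
  rewrite /= in IH *; rewrite IH; last by apply/leP.
  rewrite P_empty; ring.
by rewrite /Rdist Rminus_diag Rabs_R0.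
Qed.
End Prob.


Section Atoms.
Variable V : finType.
Variable Om : probability_space.
Variable A : V -> Om -> Prop.
Hypothesis A_meas : forall v, ps_meas Om (A v).
Local Notation P := (ps_P Om).
Local Notation M := (ps_meas Om).

Lemma meas_all (G : V -> Om -> Prop) : (forall v, M (G v)) -> M (fun w => forall v, G v w).
Proof.
move=> HG.
suff H : forall s : seq V, M (fun w => forall v, v \in s -> G v w).
  have := H (index_enum V); congr M; apply: pext => w; split => Hw v //; by apply: Hw; rewrite mem_index_enum.
elim=> [|v s IH].
  have -> : (fun w : Om => forall v : V, v \in [::] -> G v w) = (fun _ => True).
    by apply: pext => w; split => // _ v; rewrite in_nil.
  exact: ps_meas_full.
have -> : (fun w => forall u, u \in v :: s -> G u w) = (fun w => G v w /\ (fun w => forall u, u \in s -> G u w) w).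
  apply: pext => w; split => [H|[H1 H2] u]; first by split => [|u Hu]; apply: H; rewrite inE ?eqxx ?Hu ?orbT.
  by rewrite inE => /orP [/eqP ->|]; [exact: H1 | exact: H2].
exact: meas_and.
Qed.

Definition atom (T : {set V}) : Om -> Prop := fun w => forall v, v \in T <-> A v w.

Lemma meas_atom T : M (atom T).
Proof.
apply: meas_all => v /=; case: (boolP (v \in T)) => Hv.
  have -> : (fun w => true <-> A v w) = A v by apply: pext => w; split => [[H1 H2]|H]; [exact: H1 | split].
  exact: A_meas.
have -> : (fun w => false <-> A v w) = (fun w => ~ A v w).
  by apply: pext => w; split => H; [move=> Ha; by have := proj2 H Ha | split].
apply: meas_not; exact: A_meas.
Qed.

Lemma meas_cap (I : {set V}) : M (bigcap_events A I).
Proof.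
apply: meas_all => v /=; case: (boolP (v \in I)) => Hv.
  have -> : (fun w => true -> A v w) = A v by apply: pext => w; split => //; by apply.
  exact: A_meas.
have -> : (fun w => false -> A v w) = (fun _ => True) by apply: pext => w.
exact: ps_meas_full.
Qed.

Lemma atom_uniq T T' w : atom T w -> atom T' w -> T = T'.
Proof.
move=> H H'; apply/setP => v; apply/idP/idP => Hv.
  by apply/(H' v); apply/(H v).
by apply/(H v); apply/(H' v).
Qed.

Definition asb (Q : Prop) : bool := if excluded_middle_informative Q then true else false.

Lemma atom_ex w : exists T, atom T w.
Proof.
exists [set v | asb (A v w)] => v; rewrite inE /asb.
by case: excluded_middle_informative => H; split.
Qed.

Lemma P_decomp_seq (X : Om -> Prop) (s : seq {set V}) : M X -> uniq s ->
  M (fun w => X w /\ exists T, T \in s /\ atom T w) /\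
  P (fun w => X w /\ exists T, T \in s /\ atom T w) = \big[Rplus/0%R]_(T <- s) P (fun w => X w /\ atom T w).
Proof.
move=> HX; elim: s => [|T s IH] Hu.
  have -> : (fun w => X w /\ exists T : {set V}, T \in [::] /\ atom T w) = (fun _ => False).
    by apply: pext => w; split => // [[_ [T []]]]; rewrite in_nil.
  by rewrite big_nil P_empty; split => //; exact: meas_empty.
case/andP: Hu => HT Hu; have [IH1 IH2] := IH Hu.
have HXT : M (fun w => X w /\ atom T w) by apply: meas_and => //; exact: meas_atom.
have -> : (fun w => X w /\ exists T', T' \in T :: s /\ atom T' w) =
  (fun w => (fun w => X w /\ atom T w) w \/ (fun w => X w /\ exists T', T' \in s /\ atom T' w) w).
  apply: pext => w; split.
    case=> Hx [T' []]; rewrite inE => /orP [/eqP ->|Hs] Ha; [by left | by right; split => //; exists T'].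
  case=> [[Hx Ha]|[Hx [T' [Hs Ha]]]]; split => //; [exists T | exists T']; by rewrite inE ?eqxx ?Hs ?orbT.
split; first exact: meas_or.
rewrite P_add //; first by rewrite big_cons IH2.
move=> w [_ Ha] [_ [T' [Hs Ha']]]; have E := atom_uniq Ha Ha'; by rewrite E Hs in HT.
Qed.

Lemma P_decomp (X : Om -> Prop) : M X ->
  P X = \big[Rplus/0%R]_(T : {set V}) P (fun w => X w /\ atom T w).
Proof.
move=> HX; have [_ <-] := P_decomp_seq HX (index_enum_uniq {set V}).
congr P; apply: pext => w; split => [Hx|[]] //; split => //.
have [T HT] := atom_ex w; exists T; by rewrite mem_index_enum.
Qed.

Lemma P_cap (I : {set V}) :
  P (bigcap_events A I) = \big[Rplus/0%R]_(T : {set V} | I \subset T) P (atom T).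
Proof.
rewrite (P_decomp (meas_cap I)) [RHS]big_mkcond; apply: eq_bigr => T _.
case: (boolP (I \subset T)) => HIT.
  congr P; apply: pext => w; split => [[]|Ha] //; split => // i Hi.
  by apply/(Ha i); apply: (subsetP HIT).
rewrite -(@P_empty Om); congr P; apply: pext => w; split => // [[Hc Ha]].
case/subsetPn: HIT => i Hi HiT; apply: (negP HiT); apply/(Ha i); exact: Hc.
Qed.
End Atoms.


Lemma sum_nonneg (I : finType) (P : pred I) (F : I -> R) :
  (forall i, P i -> (0 <= F i)%R) -> (0 <= \big[Rplus/0%R]_(i | P i) F i)%R.
Proof.
move=> H; apply: (big_ind (fun x => (0 <= x)%R)); [lra | move=> x y; lra | exact: H].
Qed.

Unset Implicit Arguments.
Theorem theorem2 (V : finType) (e : rel V)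
  (e_sym : symmetric e) (e_irr : irreflexive e) (e_chordal : chordal e)
  (V_nonempty : (0 < #|V|)%N)
  (Om : probability_space) (A : V -> Om -> Prop)
  (A_meas : forall v, ps_meas Om (A v))
  (r : nat) (r_ge1 : (1 <= r)%N) :
  (\big[Rplus/0%R]_(I : {set V} | in_clique_complex e I) clique_term A I
   >= \big[Rplus/0%R]_(I : {set V} | in_clique_complex e I && (leq #|I| (muln 2 r)))
        clique_term A I)%R.
Proof.
rewrite (bigID (fun I : {set V} => leq #|I| (muln 2 r))) /=.
set S1 := (\big[Rplus/0%R]_(I : {set V} | in_clique_complex e I && (#|I| <= 2 * r)) clique_term A I).
suff : (0 <= \big[Rplus/0%R]_(I : {set V} | in_clique_complex e I && ~~ (#|I| <= 2 * r)%N) clique_term A I)%R.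
  move=> H; apply: Rle_ge; have := Rplus_le_compat_l S1 _ _ H; rewrite Rplus_0_r; exact.
have E1 : \big[Rplus/0%R]_(I : {set V} | in_clique_complex e I && ~~ (#|I| <= 2 * r)%N) clique_term A I =
  \big[Rplus/0%R]_(I : {set V} | in_clique_complex e I && ~~ (#|I| <= 2 * r)%N)
     \big[Rplus/0%R]_(T : {set V}) (if I \subset T then ((-1) ^ (#|I| - 1)%N * ps_P Om (atom A T))%R else 0%R).
  apply: eq_bigr => I _; rewrite /clique_term (P_cap A_meas I) big_distrr /= big_mkcond.
  by apply: eq_bigr => T _; case: (I \subset T) => //; rewrite Rmult_0_r.
rewrite E1 exchange_big /=; apply: sum_nonneg => T _.
rewrite -big_mkcondr -big_distrl /=.
apply: Rmult_le_pos; last exact: ps_P_nonneg (meas_atom A_meas T).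
have Hg := gk_sign e_sym e_irr e_chordal (leqnn #|T|) (ltn0Sn (2 * r)).
rewrite pow_1_odd in Hg.
suff -> : \big[Rplus/0%R]_(I : {set V} | (in_clique_complex e I && ~~ (#|I| <= 2 * r)%N) && (I \subset T)) ((-1) ^ (#|I| - 1)%N)%R
   = (- gk e (2 * r).+1 T)%R by lra.
rewrite /gk opp_m1 big_distrr /=.
apply: eq_big => I.
  rewrite /in_clique_complex -ltnNge.
  case: (ltnP (2 * r) #|I|) => H; last by rewrite !andbF.
  have -> : (I != set0) = true by rewrite -card_gt0 (leq_ltn_trans (leq0n _) H).
  by rewrite /clq /=; case: (I \subset T); case: [forall x in I, forall y in I, (x != y) ==> e x y].
move=> /andP [/andP [_ H] _]; rewrite -ltnNge in H.
case E: #|I| H => [|n] H //.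
rewrite subSS subn0 /=; ring.
Qed.
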